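(* Let $L>1$ and define $$\sigma_{0,2}=\frac{L+1}{L\ln L},\qquad \sigma_{1,2}=\frac{(L^2+1)+\sqrt{(L-1)^4+4L^2}}{2L(L-1)},$$ $$\sigma_{2,1}=\frac{(1+L^4)-\sqrt{(1+L^4)^2-4L(1+L^2)^2(1-L)^2}}{L(L-1)(1+L^2)}.$$ Then (1) $\sigma_{0,2}\le\sigma_{1,2}$ and (2) $\sigma_{2,1}\le\sigma_{0,2}$.
   Context: These are (for $n=2$) Steklov eigenvalues of the planar annulus $\{1<|x|<L\}$, but the claim is the stated inequality between the explicit expressions. *)

(* Defs.v *)
From Stdlib Require Import Reals.
Open Scope R_scope.

Definition sigma02 (L : R) : R := (L + 1) / (L * ln L).

Definition sigma12 (L : R) : R :=
  ((L ^ 2 + 1) + sqrt ((L - 1) ^ 4 + 4 * L ^ 2)) / (2 * L * (L - 1)).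

Definition sigma21 (L : R) : R :=
  ((1 + L ^ 4) - sqrt ((1 + L ^ 4) ^ 2 - 4 * L * (1 + L ^ 2) ^ 2 * (1 - L) ^ 2))
  / (L * (L - 1) * (1 + L ^ 2)).

(* Main.v *)
Require Import Defs.
From Stdlib Require Import Reals Lra.
From Coquelicot Require Import Coquelicot.
Open Scope R_scope.

Lemma ln_lower (L : R) : 1 < L -> 2 * (L - 1) / (L + 1) <= ln L.
Proof.
  intros hL.
  set (f := fun x => ln x - 2 * (x - 1) / (x + 1)).
  set (f' := fun x => / x - 4 / (x + 1) ^ 2).
  destruct (MVT_cor2 f f' 1 L hL) as [c [Hc1 Hc2]].
  { intros c Hc. apply is_derive_Reals. unfold f, f'.
    auto_derive.
    - lra.
    - field. lra. }
  assert (0 <= f' c).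
  { unfold f'. assert (c + 1 <> 0) by lra.
    replace (/ c - 4 / (c + 1) ^ 2) with ((c - 1) ^ 2 / (c * (c + 1) ^ 2)) by (field; lra).
    apply Rdiv_le_0_compat. nra. apply Rmult_lt_0_compat; nra. }
  unfold f in Hc1. rewrite ln_1 in Hc1.
  replace (2 * (1 - 1) / (1 + 1)) with 0 in Hc1 by field.
  nra.
Qed.

Lemma ln_upper (L : R) : 1 < L -> ln L <= (L ^ 2 - 1) / (2 * L).
Proof.
  intros hL.
  set (f := fun x => (x ^ 2 - 1) / (2 * x) - ln x).
  set (f' := fun x => (x ^ 2 + 1) / (2 * x ^ 2) - / x).
  destruct (MVT_cor2 f f' 1 L hL) as [c [Hc1 Hc2]].
  { intros c Hc. apply is_derive_Reals. unfold f, f'.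
    auto_derive.
    - lra.
    - field. lra. }
  assert (0 <= f' c).
  { unfold f'.
    replace ((c ^ 2 + 1) / (2 * c ^ 2) - / c) with ((c - 1) ^ 2 / (2 * c ^ 2)) by (field; lra).
    apply Rdiv_le_0_compat. nra. nra. }
  unfold f in Hc1. rewrite ln_1 in Hc1.
  replace ((1 ^ 2 - 1) / (2 * 1)) with 0 in Hc1 by field.
  nra.
Qed.

Theorem lemma2p2 (L : R) (hL : 1 < L) :
  sigma02 L <= sigma12 L /\ sigma21 L <= sigma02 L.
Proof.
  pose proof (ln_lower L hL) as Hlo.
  pose proof (ln_upper L hL) as Hup.
  assert (Hl : 0 < ln L).
  { apply Rlt_le_trans with (2 := Hlo). apply Rdiv_lt_0_compat; lra. }
  unfold sigma02, sigma12, sigma21.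
  split.
  - set (S := sqrt ((L - 1) ^ 4 + 4 * L ^ 2)).
    assert (HS : 2 * L <= S).
    { unfold S. rewrite <- (sqrt_pow2 (2 * L)) by lra.
      apply sqrt_le_1_alt.
      assert (0 <= (L - 1) ^ 4).
      { replace ((L - 1) ^ 4) with (((L - 1) ^ 2) ^ 2) by ring. apply pow2_ge_0. }
      replace ((2 * L) ^ 2) with (4 * L ^ 2) by ring. lra. }
    apply Rle_trans with ((L + 1) ^ 2 / (2 * L * (L - 1))).
    + apply Rle_trans with ((L + 1) / (L * (2 * (L - 1) / (L + 1)))).
      * apply Rmult_le_compat_l; [lra|].
        apply Rinv_le_contravar.
        -- apply Rmult_lt_0_compat; [lra|]. apply Rdiv_lt_0_compat; lra.
        -- apply Rmult_le_compat_l; lra.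
      * right. field. lra.
    + unfold Rdiv. apply Rmult_le_compat_r.
      * left. apply Rinv_0_lt_compat. nra.
      * nra.
  - set (s := sqrt ((1 + L ^ 4) ^ 2 - 4 * L * (1 + L ^ 2) ^ 2 * (1 - L) ^ 2)).
    assert (Hs : (L ^ 2 + 1) * (L - 1) ^ 2 <= s).
    { unfold s. rewrite <- (sqrt_pow2 ((L ^ 2 + 1) * (L - 1) ^ 2)).
      2: { apply Rmult_le_pos; [nra | apply pow2_ge_0]. }
      apply sqrt_le_1_alt.
      assert (0 <= 4 * L ^ 4).
      { replace (L ^ 4) with ((L ^ 2) ^ 2) by ring. nra. }
      match goal with |- ?a <= ?b => replace b with (a + 4 * L ^ 4) by ring end. lra. }
    apply Rle_trans with (2 / (L - 1)).
    + assert (HD : 0 < L * (L - 1) * (1 + L ^ 2)).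
      { apply Rmult_lt_0_compat; [nra|nra]. }
      apply Rle_trans with ((2 * L * (1 + L ^ 2)) / (L * (L - 1) * (1 + L ^ 2))).
      * unfold Rdiv. apply Rmult_le_compat_r.
        -- left. apply Rinv_0_lt_compat. exact HD.
        -- nra.
      * right. field. split; nra.
    + apply Rle_trans with ((L + 1) / (L * ((L ^ 2 - 1) / (2 * L)))).
      * right. field. split; nra.
      * apply Rmult_le_compat_l; [lra|].
        apply Rinv_le_contravar.
        -- apply Rmult_lt_0_compat; lra.
        -- apply Rmult_le_compat_l; lra.
Qed.
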